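(* Let $n \ge 1$ and let $\boldsymbol{x} \in \mathbb{C}^n$ be a mixture of complex sinusoids, i.e. $\boldsymbol{x} = \sum_{k=1}^{K} s_k \boldsymbol{a}(f_k)$ for some $K$, $s_k \in \mathbb{C}$, $f_k \in [0,1)$. Then $$\|\boldsymbol{x}\|_{\mathcal{A}} = \inf_{r,\; d_j > 0,\; f_j \in [0,1)} \; \lim_{\beta \to 0^+} \left\{ \frac{1}{2}\sum_{j=1}^{r} d_j + \frac{1}{2}\, \boldsymbol{x}^H \boldsymbol{C}^{-1} \boldsymbol{x} \right\},$$ where $\boldsymbol{C} = \sum_{j=1}^{r} d_j\, \boldsymbol{a}(f_j)\boldsymbol{a}(f_j)^H + \beta \boldsymbol{I}$, the infimum is over all positive integers $r$, all $d_1,\dots,d_r>0$ and all $f_1,\dots,f_r \in [0,1)$, and the limit is allowed to take the value $+\infty$.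
   Context: For $f \in [0,1)$, the atom $\boldsymbol{a}(f) \in \mathbb{C}^n$ is $\boldsymbol{a}(f) = [1,\ e^{-2\pi i f},\ e^{-2\pi i 2f},\ \dots,\ e^{-2\pi i (n-1) f}]^T$. The atomic set is $\mathcal{A} = \{\boldsymbol{a}(f) : f \in [0,1)\}$, and the atomic norm of $\boldsymbol{x} \in \mathbb{C}^n$ is $\|\boldsymbol{x}\|_{\mathcal{A}} = \inf\{ \sum_{k=1}^{r} |s_k| : r \in \mathbb{N},\ s_k \in \mathbb{C},\ \boldsymbol{a}_k \in \mathcal{A},\ \boldsymbol{x} = \sum_{k=1}^{r} s_k \boldsymbol{a}_k \}$. $\boldsymbol{I}$ is the $n\times n$ identity, and $^H$ denotes conjugate transpose. *)

(* Defs.v *)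
From HB Require Import structures.
From mathcomp Require Import all_boot all_order all_algebra.
From mathcomp Require Import all_classical all_reals all_analysis.
From mathcomp Require Import complex.
Set Implicit Arguments. Unset Strict Implicit. Unset Printing Implicit Defensive.
Import Order.TTheory GRing.Theory Num.Theory.
Import numFieldNormedType.Exports.
Local Open Scope classical_set_scope.
Local Open Scope ring_scope.
Local Open Scope complex_scope.

(* The atom a(f) in C^n: a(f)_k = e^{-2 pi i k f} = cos(2 pi k f) - i sin(2 pi k f). *)
Definition atom (R : realType) (n : nat) (f : R) : 'cV[R[i]]_n :=
  \col_(k < n) ((cos (2 * pi * k%:R * f)) -i* (sin (2 * pi * k%:R * f))).

Definition ctrmx (R : realType) (m n : nat) (A : 'M[R[i]]_(m, n)) : 'M[R[i]]_(n, m) :=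
  map_mx conjc A^T.

Definition is_mixture (R : realType) (n : nat) (x : 'cV[R[i]]_n) : Prop :=
  exists (K : nat) (s : 'I_K -> R[i]) (f : 'I_K -> R),
    (forall k, 0 <= f k < 1) /\ x = \sum_(k < K) s k *: atom n (f k).

Definition atomic_norm (R : realType) (n : nat) (x : 'cV[R[i]]_n) : R :=
  inf [set t : R | exists (r : nat) (s : 'I_r -> R[i]) (f : 'I_r -> R),
         (forall k, 0 <= f k < 1) /\ x = \sum_(k < r) s k *: atom n (f k) /\
         t = \sum_(k < r) @complex.Re R `|s k|].

Definition covmx (R : realType) (n r : nat) (d f : 'I_r -> R) (beta : R)
  : 'M[R[i]]_n :=
  \sum_(j < r) (d j)%:C *: (atom n (f j) *m ctrmx (atom n (f j))) + (beta%:C)%:M.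

(* the objective 1/2 sum d_j + 1/2 x^H C^{-1} x (the quadratic form is real
   for beta > 0 since C is Hermitian; we take its real part) *)
Definition objective (R : realType) (n r : nat) (x : 'cV[R[i]]_n)
  (d f : 'I_r -> R) (beta : R) : \bar R :=
  ((2^-1 * \sum_(j < r) d j) +
   2^-1 * @complex.Re R ((ctrmx x *m invmx (covmx n d f beta) *m x) ord0 ord0))%:E.

(* Main.v *)
Require Import Defs.
From HB Require Import structures.
From mathcomp Require Import all_boot all_order all_algebra.
From mathcomp Require Import all_classical all_reals all_analysis.
From mathcomp Require Import complex.
From mathcomp Require Import ring lra.
Import Order.TTheory GRing.Theory Num.Theory.
Import numFieldNormedType.Exports.
Local Open Scope classical_set_scope.
Local Open Scope ring_scope.
Set Implicit Arguments. Unset Strict Implicit.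


Section Cplx.
Variable R : realType.
Local Notation C := R[i].

Definition nz (z : C) : R := complex.Re z ^+ 2 + complex.Im z ^+ 2.

Lemma nz_ge0 (z : C) : 0 <= nz z.
Proof. by rewrite /nz addr_ge0 // sqr_ge0. Qed.

Lemma conjc_mulE (z : C) : conjc z * z = (nz z)%:C%C.
Proof.
case: z => a b; apply/eqP; rewrite eq_complex /= /nz /=; apply/andP; split; apply/eqP.
  by rewrite !expr2; ring.
by ring.
Qed.

Lemma Re_conjc (z : C) : complex.Re (conjc z) = complex.Re z. Proof. by case: z. Qed.
Lemma Re_real (a : R) : complex.Re (a%:C%C) = a. Proof. by []. Qed.
Lemma Re_D (z w : C) : complex.Re (z + w) = complex.Re z + complex.Re w. Proof. by case: z; case: w. Qed.
Lemma Re_N (z : C) : complex.Re (- z) = - complex.Re z. Proof. by case: z. Qed.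
Lemma Re_sum I (r : seq I) P (F : I -> C) :
  complex.Re (\sum_(i <- r | P i) F i) = \sum_(i <- r | P i) complex.Re (F i).
Proof. by elim/big_rec2: _ => // i y1 y2 _ <-; rewrite Re_D. Qed.
Lemma Re_realM (a : R) (z : C) : complex.Re (a%:C%C * z) = a * complex.Re z.
Proof. case: z => x y /=; ring. Qed.
Lemma Re_normc (z : C) : complex.Re `|z| = Num.sqrt (nz z).
Proof. by rewrite normc_def. Qed.

Lemma real_sum I (r : seq I) P (F : I -> R) :
  ((\sum_(i <- r | P i) F i)%:C)%C = \sum_(i <- r | P i) ((F i)%:C)%C.
Proof. by rewrite rmorph_sum. Qed.


Section Dot.
Variable n : nat.
Implicit Types u v w : 'cV[C]_n.

Definition dot u v : C := \sum_l conjc (u l 0) * v l 0.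

Lemma ctrmx_dot u v : (ctrmx u *m v) 0 0 = dot u v.
Proof. by rewrite !mxE; apply: eq_bigr => l _; rewrite !mxE. Qed.

Lemma dot_conj u v : conjc (dot u v) = dot v u.
Proof.
rewrite /dot rmorph_sum; apply: eq_bigr => l _.
by rewrite rmorphM /= conjcK mulrC.
Qed.

Lemma dotDr u v w : dot u (v + w) = dot u v + dot u w.
Proof. by rewrite /dot -big_split; apply: eq_bigr => l _; rewrite mxE mulrDr. Qed.

Lemma dotZr u (c : C) v : dot u (c *: v) = c * dot u v.
Proof. by rewrite /dot mulr_sumr; apply: eq_bigr => l _; rewrite mxE mulrCA. Qed.

Lemma dotNr u v : dot u (- v) = - dot u v.
Proof. by rewrite -scaleN1r dotZr mulN1r. Qed.

Lemma dotBr u v w : dot u (v - w) = dot u v - dot u w.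
Proof. by rewrite dotDr dotNr. Qed.

Lemma dot_sumr u I (r : seq I) P (F : I -> 'cV[C]_n) :
  dot u (\sum_(i <- r | P i) F i) = \sum_(i <- r | P i) dot u (F i).
Proof.
elim/big_rec2: _ => [|i y1 y2 _ <-]; last by rewrite dotDr.
by rewrite /dot big1 // => l _; rewrite mxE mulr0.
Qed.

Lemma dotDl u v w : dot (u + v) w = dot u w + dot v w.
Proof. by rewrite -dot_conj dotDr rmorphD /= !dot_conj. Qed.

Lemma dotZl (c : C) u v : dot (c *: u) v = conjc c * dot u v.
Proof. by rewrite -dot_conj dotZr rmorphM /= !dot_conj. Qed.

Lemma dotNl u v : dot (- u) v = - dot u v.
Proof. by rewrite -dot_conj dotNr rmorphN /= !dot_conj. Qed.

Lemma dotBl u v w : dot (u - v) w = dot u w - dot v w.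
Proof. by rewrite dotDl dotNl. Qed.

Lemma dot_suml v I (r : seq I) P (F : I -> 'cV[C]_n) :
  dot (\sum_(i <- r | P i) F i) v = \sum_(i <- r | P i) dot (F i) v.
Proof.
rewrite -dot_conj dot_sumr rmorph_sum /=; apply: eq_bigr => i _; exact: dot_conj.
Qed.

Definition nrm u : R := \sum_l nz (u l 0).

Lemma nrm_ge0 u : 0 <= nrm u.
Proof. by apply: sumr_ge0 => l _; apply: nz_ge0. Qed.

Lemma dot_self u : dot u u = (nrm u)%:C%C.
Proof. by rewrite /nrm real_sum; apply: eq_bigr => l _; rewrite conjc_mulE. Qed.

Lemma nrm_eq0 u : nrm u = 0 -> u = 0.
Proof.
move=> /eqP; rewrite psumr_eq0; last by move=> l _; apply: nz_ge0.
move=> /allP H; apply/matrixP => l j; rewrite ord1 mxE.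
have /implyP := H l (mem_index_enum l); move=> /(_ isT) /eqP.
case: (u l 0) => a b; rewrite /nz /= => /eqP.
rewrite paddr_eq0 ?sqr_ge0 // !sqrf_eq0 => /andP[/eqP-> /eqP->] //.
Qed.

Lemma nz_le_nrm u l : nz (u l 0) <= nrm u.
Proof.
rewrite /nrm (bigD1 l) //= lerDl; apply: sumr_ge0 => k _; exact: nz_ge0.
Qed.

End Dot.

Lemma ctrmx_mul_col n (v w : 'cV[C]_n) : ctrmx v *m w = (dot v w)%:M.
Proof. by rewrite [LHS]mx11_scalar ctrmx_dot. Qed.

Section Cov.
Variables (n r : nat) (d f : 'I_r -> R).
Hypothesis hd : forall j, 0 < d j.
Local Notation a j := (atom n (f j)).
Local Notation cov := (covmx n d f).

Lemma cov_mul (b : R) (w : 'cV[C]_n) :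
  cov b *m w = \sum_j (((d j)%:C)%C * dot (a j) w) *: a j + ((b%:C)%C) *: w.
Proof.
rewrite /covmx mulmxDl mulmx_suml mul_scalar_mx; congr (_ + _).
apply: eq_bigr => j _.
by rewrite -scalemxAl -mulmxA ctrmx_mul_col mul_mx_scalar scalerA.
Qed.

Lemma cov_dot (b : R) (v w : 'cV[C]_n) : dot v (cov b *m w) =
  \sum_j ((d j)%:C)%C * (dot (a j) w * conjc (dot (a j) v)) + (b%:C)%C * dot v w.
Proof.
rewrite cov_mul dotDr dot_sumr dotZr; congr (_ + _).
apply: eq_bigr => j _; by rewrite dotZr -(dot_conj (a j) v) mulrA.
Qed.

Lemma cov_herm (b : R) (u v : 'cV[C]_n) :
  dot u (cov b *m v) = conjc (dot v (cov b *m u)).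
Proof.
rewrite !cov_dot rmorphD rmorph_sum /=; congr (_ + _).
  apply: eq_bigr => j _; rewrite !rmorphM /= conjcK oppr0 [X in _ * X]mulrC; by [].
by rewrite rmorphM /= oppr0 dot_conj.
Qed.

Definition Q (b : R) (w : 'cV[C]_n) : R :=
  \sum_j d j * nz (dot (a j) w) + b * nrm w.

Lemma cov_quad (b : R) (w : 'cV[C]_n) : dot w (cov b *m w) = ((Q b w)%:C)%C.
Proof.
rewrite cov_dot dot_self /Q rmorphD; congr (_ + _).
  by rewrite rmorph_sum; apply: eq_bigr => j _; rewrite rmorphM /= [dot _ _ * _]mulrC conjc_mulE.
by rewrite rmorphM.
Qed.

Lemma Q_ge0 (b : R) w : 0 <= b -> 0 <= Q b w.
Proof.
move=> hb; rewrite /Q addr_ge0 //; last by rewrite mulr_ge0 // nrm_ge0.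
by apply: sumr_ge0 => j _; rewrite mulr_ge0 ?nz_ge0 // ltW.
Qed.

Lemma cov_unit (b : R) : 0 < b -> cov b \in unitmx.
Proof.
move=> hb; rewrite -unitmx_tr -row_free_unit -kermx_eq0.
apply/eqP/row_matrixP => i; rewrite row0.
set v := row i _.
have hv : v *m (cov b)^T = 0 by apply/sub_kermxP; rewrite row_sub.
have hw : cov b *m v^T = 0 by rewrite -[cov b]trmxK -trmx_mul hv trmx0.
have := cov_quad b v^T; rewrite hw -(scale0r (0 : 'cV[C]_n)) dotZr mul0r.
move=> /esym [] /eqP; rewrite /Q paddr_eq0; last 2 first.
- by apply: sumr_ge0 => j _; rewrite mulr_ge0 ?nz_ge0 // ltW.
- by rewrite mulr_ge0 ?nrm_ge0 // ltW.
move=> /andP[_]; rewrite mulf_eq0 (gt_eqF hb) /= => /eqP/nrm_eq0 hv0.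
by rewrite -[v]trmxK hv0 trmx0.
Qed.

End Cov.

Section Sol.
Variables (n r : nat) (d f : 'I_r -> R) (x : 'cV[C]_n).
Hypothesis hd : forall j, 0 < d j.
Local Notation a j := (atom n (f j)).
Local Notation cov := (covmx n d f).

Definition u (b : R) := invmx (cov b) *m x.

Lemma cov_u b : 0 < b -> cov b *m u b = x.
Proof. by move=> hb; rewrite /u mulKVmx // cov_unit. Qed.

Definition q (b : R) : R := complex.Re (dot x (u b)).

Lemma objectiveE b : objective x d f b = (2^-1 * \sum_j d j + 2^-1 * q b)%:E.
Proof. by rewrite /objective -mulmxA ctrmx_dot. Qed.

Lemma dot_xu b : 0 < b -> dot x (u b) = ((Q d f b (u b))%:C)%C.
Proof.
move=> hb; rewrite -{1}(cov_u hb) -dot_conj cov_quad /=.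
by rewrite oppr0.
Qed.

Lemma q_eq b : 0 < b -> q b = Q d f b (u b).
Proof. by move=> hb; rewrite /q dot_xu. Qed.

Lemma q_ge0 b : 0 < b -> 0 <= q b.
Proof. by move=> hb; rewrite q_eq // Q_ge0 // ltW. Qed.

Lemma var_ineq b v : 0 < b -> 2 * complex.Re (dot v x) - Q d f b v <= q b.
Proof.
move=> hb.
have E : Q d f b (v - u b) = Q d f b v - 2 * complex.Re (dot v x) + q b.
  have := cov_quad d f b (v - u b).
  rewrite mulmxBr cov_u // dotBl !dotBr cov_quad cov_herm cov_u //.
  move/(congr1 (@complex.Re R)); rewrite /= => <-.
  rewrite !(Re_D, Re_N) Re_conjc -(dot_conj x (u b)) Re_conjc /q /=; ring.
have := Q_ge0 f hd (v - u b) (ltW hb); rewrite E; lra.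
Qed.

Lemma q_anti b1 b2 : 0 < b1 -> b1 <= b2 -> q b2 <= q b1.
Proof.
move=> h1 h12; have h2 : 0 < b2 by apply: lt_le_trans h12.
have := var_ineq (u b2) h1.
rewrite -(dot_conj x (u b2)) Re_conjc -/(q b2).
have : Q d f b1 (u b2) <= Q d f b2 (u b2).
  by rewrite /Q lerD2l ler_wpM2r // nrm_ge0.
rewrite -q_eq //; lra.
Qed.

End Sol.

Lemma re_amgm (s z : C) (dd : R) : 0 < dd ->
  complex.Re (conjc s * z) <= nz s / (2 * dd) + dd * nz z / 2.
Proof.
move=> hdd; case: s => a b; case: z => c e; rewrite /nz /=.
have h0 : 0 <= ((a - dd * c) ^+ 2 + (b - dd * e) ^+ 2) / (2 * dd).
  by rewrite divr_ge0 ?addr_ge0 ?sqr_ge0 // mulr_ge0 // ltW.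
rewrite -subr_ge0; apply: le_trans h0 _; rewrite le_eqVlt; apply/orP; left; apply/eqP.
field; by rewrite gt_eqF.
Qed.

Lemma normc_Re_ge0 (z : C) : 0 <= complex.Re `|z|.
Proof. by rewrite Re_normc sqrtr_ge0. Qed.

Lemma sqrt_amgm (t : R) : 0 <= t -> Num.sqrt t <= (1 + t) / 2.
Proof.
move=> ht; have := sqr_ge0 (1 - Num.sqrt t).
rewrite sqrrB sqr_sqrtr // expr1n => h.
rewrite ler_pdivlMr //; lra.
Qed.

Section Atomic.
Variable n : nat.

Definition AS (x : 'cV[C]_n) := [set t : R | exists (r : nat) (s : 'I_r -> R[i]) (f : 'I_r -> R),
         (forall k, 0 <= f k < 1) /\ x = \sum_(k < r) s k *: atom n (f k) /\
         t = \sum_(k < r) @complex.Re R `|s k|].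

Lemma atomic_normE x : atomic_norm x = inf (AS x).
Proof. by []. Qed.

Lemma AS_lb x : has_lbound (AS x).
Proof.
exists 0 => t [r [s [f [_ [_ ->]]]]]; apply: sumr_ge0 => k _; exact: normc_Re_ge0.
Qed.

Lemma an_le x r (s : 'I_r -> C) (f : 'I_r -> R) : (forall k, 0 <= f k < 1) ->
  x = \sum_(k < r) s k *: atom n (f k) -> atomic_norm x <= \sum_(k < r) complex.Re `|s k|.
Proof. by move=> hf hx; rewrite atomic_normE; apply: (ge_inf (AS_lb x)); by exists r, s, f. Qed.

Lemma an_le2 x r1 (s1 : 'I_r1 -> C) (f1 : 'I_r1 -> R) r2 (s2 : 'I_r2 -> C) (f2 : 'I_r2 -> R) :
  (forall k, 0 <= f1 k < 1) -> (forall k, 0 <= f2 k < 1) ->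
  x = \sum_(k < r1) s1 k *: atom n (f1 k) + \sum_(k < r2) s2 k *: atom n (f2 k) ->
  atomic_norm x <= \sum_(k < r1) complex.Re `|s1 k| + \sum_(k < r2) complex.Re `|s2 k|.
Proof.
move=> h1 h2 hx.
pose s k := match fintype.split k with inl j => s1 j | inr j => s2 j end.
pose f k := match fintype.split k with inl j => f1 j | inr j => f2 j end.
have El j : fintype.split (lshift r2 j) = inl j := unsplitK (inl j).
have Er j : fintype.split (rshift r1 j) = inr j := unsplitK (inr j).
have e1 : \sum_(k < r1 + r2) s k *: atom n (f k) =
   \sum_(k < r1) s1 k *: atom n (f1 k) + \sum_(k < r2) s2 k *: atom n (f2 k).
  by rewrite big_split_ord; congr (_ + _); apply: eq_bigr => j _; rewrite /s /f ?El ?Er.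
have e2 : \sum_(k < r1 + r2) complex.Re `|s k| =
   \sum_(k < r1) complex.Re `|s1 k| + \sum_(k < r2) complex.Re `|s2 k|.
  by rewrite big_split_ord; congr (_ + _); apply: eq_bigr => j _; rewrite /s ?El ?Er.
rewrite -e2; apply: (an_le (f := f)); last by rewrite e1.
by move=> k; rewrite /f; case: (fintype.split k).
Qed.

End Atomic.
End Cplx.


Section Basis.
Variable R : realType.
Local Notation C := R[i].

Lemma Re_mono (z w : C) : z <= w -> complex.Re z <= complex.Re w.
Proof. by rewrite lecE => /andP[_]. Qed.

Lemma Re_normM (z w : C) : complex.Re (`|z| * `|w|) = complex.Re `|z| * complex.Re `|w|.
Proof. by rewrite !normc_def /= mul0r subr0. Qed.

Definition cexp (t : R) : C := ((cos t) -i* (sin t))%C.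

Lemma cexpX (t : R) k : cexp t ^+ k = cexp (k%:R * t).
Proof.
elim: k => [|k IH]; first by rewrite expr0 mul0r /cexp cos0 sin0 oppr0.
rewrite exprSr IH /cexp -addn1 natrD mulrDl mul1r cosD sinD.
apply/eqP; rewrite eq_complex /=; apply/andP; split; apply/eqP; ring.
Qed.

Lemma atom_cexp n (g : R) (l : 'I_n) : atom n g l 0 = cexp (2 * pi * g) ^+ l.
Proof.
by rewrite cexpX /atom mxE /cexp; congr (Complex (cos _) (- sin _)); ring.
Qed.

Definition gb n (i : 'I_n) : R := i%:R / (2 * n%:R).

Lemma gb_range n (i : 'I_n) : 0 <= gb i < 1.
Proof.
have hn : (0 < n)%N by apply: leq_ltn_trans (ltn_ord i).
have hn' : (0 : R) < n%:R by rewrite ltr0n.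
have hi : (i%:R : R) < n%:R by rewrite ltr_nat.
rewrite /gb divr_ge0 ?ler0n ?mulr_ge0 ?ler0n //= ltr_pdivrMr ?mulr_gt0 //; lra.
Qed.

Lemma gb_angle n (i : 'I_n) : 2 * pi * gb i \in `[0, pi].
Proof.
have hn : (0 < n)%N by apply: leq_ltn_trans (ltn_ord i).
have hn' : (0 : R) < n%:R by rewrite ltr0n.
have hi : (i%:R : R) < n%:R by rewrite ltr_nat.
have hpi := pi_gt0 R.
have e : 2 * pi * gb i = pi * (i%:R / n%:R).
  by rewrite /gb; field; rewrite gt_eqF.
rewrite e in_itv /= mulr_ge0 ?divr_ge0 ?ler0n ?(ltW hpi) //=.
by rewrite ler_piMr ?(ltW hpi) // ler_pdivrMr // mul1r ltW.
Qed.

Lemma gb_inj n (i j : 'I_n) : cexp (2 * pi * gb i) = cexp (2 * pi * gb j) -> i = j.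
Proof.
move=> /(congr1 (@complex.Re R)) /= /(cos_inj (gb_angle i) (gb_angle j)) h.
have hn : (0 < n)%N by apply: leq_ltn_trans (ltn_ord i).
have hn' : (0 : R) < n%:R by rewrite ltr0n.
have hpi := pi_gt0 R.
apply: val_inj => /=; apply/eqP; rewrite -(eqr_nat R); apply/eqP.
have e (k : 'I_n) : 2 * pi * gb k = (pi / n%:R) * k%:R.
  by rewrite /gb; field; rewrite gt_eqF.
rewrite !e in h.
apply: (mulfI _ h); rewrite mulf_neq0 ?invr_eq0 ?gt_eqF //.
Qed.

Definition Vb n : 'M[C]_n := Vandermonde n (\row_i cexp (2 * pi * gb i)).

Lemma Vb_col n (i : 'I_n) : col i (Vb n) = atom n (gb i).
Proof. by apply/matrixP => l k; rewrite ord1 atom_cexp !mxE. Qed.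

Lemma Vb_unit n : Vb n \in unitmx.
Proof.
rewrite unitmxE unitfE det_Vandermonde; apply/prodf_neq0 => i _.
apply/prodf_neq0 => j hij; rewrite !mxE subr_eq0; apply/eqP => /gb_inj e.
by move: hij; rewrite e ltnn.
Qed.

Lemma basis_decomp n : exists (g : 'I_n -> R) (K : R),
  [/\ (forall i, 0 <= g i < 1), 0 <= K &
   forall w : 'cV[C]_n, exists c : 'I_n -> C,
     w = \sum_i c i *: atom n (g i) /\
     \sum_i complex.Re `|c i| <= K * \sum_l complex.Re `|w l 0|].
Proof.
pose Vi := invmx (Vb n).
exists (@gb n), (\sum_i \sum_l complex.Re `|Vi i l|); split.
- exact: gb_range.
- by apply: sumr_ge0 => i _; apply: sumr_ge0 => l _; apply: normc_Re_ge0.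
move=> w; pose c := Vi *m w; exists (fun i => c i 0); split.
  have -> : w = Vb n *m c by rewrite /c /Vi mulKVmx // Vb_unit.
  apply/matrixP => l k; rewrite ord1 !mxE summxE; apply: eq_bigr => i _.
  rewrite !mxE cexpX /cexp mulrC; congr (_ * Complex (cos _) (- sin _)); ring.
set S := \sum_l complex.Re `|w l 0|.
have hS l : complex.Re `|w l 0| <= S.
  rewrite /S (bigD1 l) //= lerDl; apply: sumr_ge0 => k _; exact: normc_Re_ge0.
rewrite mulr_suml; apply: ler_sum => i _.
rewrite mulr_suml.
apply: le_trans (_ : \sum_l complex.Re `|Vi i l| * complex.Re `|w l 0| <= _); last first.
  by apply: ler_sum => l _; apply: ler_wpM2l => //; apply: normc_Re_ge0.
rewrite -(eq_bigr _ (fun l _ => Re_normM (Vi i l) (w l 0))) -Re_sum.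
apply: Re_mono; rewrite /c mxE; apply: le_trans (ler_norm_sum _ _ _) _.
by apply: ler_sum => l _; rewrite normrM.
Qed.

End Basis.


Section LB.
Variable R : realType.
Local Notation C := R[i].
Variables (n r : nat) (d f : 'I_r -> R) (x : 'cV[C]_n).
Hypothesis hd : forall j, 0 < d j.
Hypothesis hf : forall j, 0 <= f j < 1.
Local Notation a j := (atom n (f j)).

Lemma Re_norm_realM (b : R) (z : C) : 0 <= b ->
  complex.Re `|(b%:C)%C * z| = b * complex.Re `|z|.
Proof. by move=> hb; rewrite normrM ger0_norm ?ler0c // Re_realM. Qed.

Lemma lb_beta (g : 'I_n -> R) (K : R) b L :
  (forall i, 0 <= g i < 1) -> 0 <= K ->
  (forall w : 'cV[C]_n, exists c : 'I_n -> C,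
     w = \sum_i c i *: atom n (g i) /\
     \sum_i complex.Re `|c i| <= K * \sum_l complex.Re `|w l 0|) ->
  0 < b -> q d f x b <= L ->
  atomic_norm x <= 2^-1 * \sum_j d j + 2^-1 * L + K * (n%:R * (Num.sqrt b * Num.sqrt L)).
Proof.
move=> hg hK hbasis hb hL.
set uu := u d f x b.
have hx : x = \sum_j (((d j)%:C)%C * dot (a j) uu) *: a j + ((b%:C)%C) *: uu.
  by rewrite -cov_mul cov_u.
have [c [hc hcK]] := hbasis ((b%:C)%C *: uu).
have := an_le2 hf hg (etrans hx (congr1 (fun t => _ + t) hc)).
move/le_trans; apply; apply: lerD.
  have hq : \sum_j d j * nz (dot (a j) uu) <= L.
    apply: le_trans hL; rewrite (q_eq f x hd hb) /Q lerDl mulr_ge0 ?nrm_ge0 // ltW //.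
  apply: le_trans (_ : \sum_j d j * ((1 + nz (dot (a j) uu)) / 2) <= _).
    apply: ler_sum => j _; rewrite Re_norm_realM ?(ltW (hd j)) //.
    by rewrite ler_wpM2l ?(ltW (hd j)) // Re_normc sqrt_amgm // nz_ge0.
  have -> : \sum_j d j * ((1 + nz (dot (a j) uu)) / 2) =
     2^-1 * \sum_j d j + 2^-1 * \sum_j d j * nz (dot (a j) uu).
    rewrite !mulr_sumr -big_split; apply: eq_bigr => j _ /=; ring.
  by rewrite lerD2l ler_wpM2l.
apply: le_trans hcK _; apply: ler_wpM2l => //.
apply: le_trans (_ : \sum_(l < n) (Num.sqrt b * Num.sqrt L) <= _); last first.
  by rewrite sumr_const card_ord mulr_natl.
apply: ler_sum => l _; rewrite mxE.
rewrite (Re_norm_realM _ (ltW hb)) Re_normc.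
have hb0 := ltW hb.
have e : b * Num.sqrt (nz (uu l 0)) = Num.sqrt b * Num.sqrt (b * nz (uu l 0)).
  by rewrite sqrtrM // mulrA -expr2 sqr_sqrtr.
rewrite e ler_wpM2l ?sqrtr_ge0 //.
rewrite ler_sqrt; last by apply: le_trans hL; apply: q_ge0 hb.
apply: le_trans hL; rewrite (q_eq f x hd hb) /Q.
apply: le_trans (_ : b * nrm uu <= _); first by rewrite ler_wpM2l // nz_le_nrm.
rewrite lerDr; apply: sumr_ge0 => j _; apply: mulr_ge0; [exact: ltW | exact: nz_ge0].
Qed.

Lemma q_ub (s : 'I_r -> C) : x = \sum_k s k *: a k ->
  forall b, 0 < b -> q d f x b <= \sum_k nz (s k) / d k.
Proof.
move=> hx b hb.
have hq := q_eq f x hd hb; set uu := u d f x b in hq.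
have h1 : q d f x b <= 2^-1 * \sum_k nz (s k) / d k + 2^-1 * \sum_k d k * nz (dot (a k) uu).
  rewrite /q -/uu {1}hx dot_suml Re_sum.
  rewrite !mulr_sumr -big_split; apply: ler_sum => k _ /=; rewrite dotZl.
  apply: le_trans (re_amgm _ _ (hd k)) _.
  rewrite le_eqVlt; apply/orP; left; apply/eqP; field.
  by rewrite gt_eqF.
have h2 : \sum_k d k * nz (dot (a k) uu) <= q d f x b.
  rewrite hq /Q lerDl; apply: mulr_ge0; [exact: ltW | exact: nrm_ge0].
lra.
Qed.

End LB.


Section Main.
Variable R : realType.
Local Notation C := R[i].
Variables (n : nat) (x : 'cV[C]_n).

Definition Eset r (d f : 'I_r -> R) :=
  [set objective x d f b | b in [set` Interval (BRight (0:R)) (BInfty R false)]].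

Lemma conv r (d f : 'I_r -> R) : (forall j, 0 < d j) ->
  objective x d f beta @[beta --> 0^'+] --> ereal_sup (Eset d f).
Proof.
move=> hd; apply: nonincreasing_at_right_cvge => //.
move=> b1 b2; rewrite !in_itv /= !andbT => h1 h2 h12.
rewrite !objectiveE lee_fin lerD2l ler_wpM2l ?invr_ge0 ?ler0n //.
exact: q_anti.
Qed.

Lemma obj_le_sup r (d f : 'I_r -> R) b : 0 < b ->
  (objective x d f b <= ereal_sup (Eset d f))%E.
Proof.
move=> hb; apply: ereal_sup_ubound; exists b => //.
by change (b \in Interval (BRight (0:R)) (BInfty R false)); rewrite in_itv /= andbT.
Qed.

Definition Sset := [set l : \bar R | exists (r : nat) (d f : 'I_r -> R),
      [/\ (0 < r)%N, (forall j, 0 < d j), (forall j, 0 <= f j < 1) &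
          objective x d f beta @[beta --> 0^'+] --> l]].

Lemma ub_elem r (s : 'I_r -> C) (f : 'I_r -> R) e : (0 < r)%N ->
  (forall k, 0 <= f k < 1) -> x = \sum_k s k *: atom n (f k) -> 0 < e ->
  exists2 l, Sset l & (l <= (\sum_k complex.Re `|s k| + e)%:E)%E.
Proof.
move=> hr hf hx he.
pose eta := e / r%:R.
have hr' : (0 : R) < r%:R by rewrite ltr0n.
have heta : 0 < eta by rewrite divr_gt0.
pose d k := complex.Re `|s k| + eta.
have hd k : 0 < d k by rewrite /d ltr_wpDl // normc_Re_ge0.
exists (ereal_sup (Eset d f)); first by exists r, d, f; split => //; apply: conv.
apply: ge_ereal_sup => y [b hb' <-].
have : b \in Interval (BRight (0:R)) (BInfty R false) := hb'.
rewrite in_itv /= andbT => hb.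
rewrite objectiveE lee_fin.
have hq := q_ub hd hx hb.
have h2 : \sum_k nz (s k) / d k <= \sum_k complex.Re `|s k|.
  apply: ler_sum => k _.
  have ht := normc_Re_ge0 (s k).
  have -> : nz (s k) = complex.Re `|s k| ^+ 2 by rewrite Re_normc sqr_sqrtr // nz_ge0.
  rewrite ler_pdivrMr // /d expr2 ler_wpM2l //; lra.
have h3 : \sum_k d k = \sum_k complex.Re `|s k| + e.
  rewrite /d big_split /= sumr_const card_ord; congr (_ + _).
  by rewrite -[eta *+ r]mulr_natr /eta divfK // gt_eqF.
rewrite h3; lra.
Qed.

End Main.

Unset Implicit Arguments.

Theorem theorem1 (R : realType) (n : nat) (x : 'cV[R[i]]_n) :
  (0 < n)%N -> is_mixture x ->
  (forall (r : nat) (d f : 'I_r -> R),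
     (0 < r)%N -> (forall j, 0 < d j) -> (forall j, 0 <= f j < 1) ->
     exists l : \bar R, objective x d f beta @[beta --> 0^'+] --> l) /\
  (atomic_norm x)%:E =
    ereal_inf [set l : \bar R | exists (r : nat) (d f : 'I_r -> R),
      [/\ (0 < r)%N, (forall j, 0 < d j), (forall j, 0 <= f j < 1) &
          objective x d f beta @[beta --> 0^'+] --> l]].
Proof.
move=> hn hmix; split.
  by move=> r d f _ hd _; eexists; apply: conv.
have hAS : has_inf (AS x).
  split; last exact: AS_lb.
  case: hmix => K [s [f [hf hx]]]; by exists (\sum_k complex.Re `|s k|), K, s, f.
apply/eqP; rewrite eq_le; apply/andP; split.
- apply: le_ereal_inf_tmp => l [r [d [f [hr hd hf hl]]]].
  have El : ereal_sup (Eset x d f) = l.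
    have h1 := cvg_lim (@ereal_hausdorff R) (FF := at_right_proper_filter 0) hl.
    have h2 := cvg_lim (@ereal_hausdorff R) (FF := at_right_proper_filter 0) (conv hd).
    by rewrite -h1 -h2.
  have hub b : 0 < b -> (objective x d f b <= l)%E.
    by move=> hb; rewrite -El; apply: obj_le_sup.
  case: l El hub {hl} => [L'| |] El hub; last first.
  + by have := hub 1 ltr01; rewrite objectiveE.
  + by rewrite leey.
  rewrite lee_fin.
  set L := 2 * L' - \sum_j d j.
  have hqL b : 0 < b -> q d f x b <= L.
    by move=> hb; have := hub b hb; rewrite objectiveE lee_fin /L; lra.
  have [g [K [hg hK hbasis]]] := basis_decomp R n.
  have hL0 : 0 <= L by apply: le_trans (hqL 1 ltr01); apply: q_ge0.
  set M := K * (n%:R * Num.sqrt L).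
  have hM : 0 <= M by rewrite /M mulr_ge0 // mulr_ge0 ?ler0n ?sqrtr_ge0.
  apply/ler_addgt0Pr => e he.
  pose b := (e / (M + 1)) ^+ 2.
  have hM1 : 0 < M + 1 by rewrite ltr_wpDl.
  have he' : 0 < e / (M + 1) by rewrite divr_gt0.
  have hb : 0 < b by rewrite /b exprn_gt0.
  have := lb_beta hd hf hg hK hbasis hb (hqL b hb).
  have sb : Num.sqrt b = e / (M + 1) by rewrite /b sqrtr_sqr ger0_norm // ltW.
  rewrite sb.
  have -> : K * (n%:R * (e / (M + 1) * Num.sqrt L)) = M * (e / (M + 1)).
    by rewrite /M; ring.
  have h1 : M * (e / (M + 1)) <= e.
    by rewrite mulrA ler_pdivrMr //; nra.
  have h2 : 2^-1 * \sum_j d j + 2^-1 * L = L' by rewrite /L; field.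
  rewrite h2; lra.
- apply/lee_addgt0Pr => e he.
  have he2 : 0 < e / 2 by rewrite divr_gt0.
  have key : forall r (s : 'I_r -> R[i]) (f : 'I_r -> R), (forall k, 0 <= f k < 1) ->
     x = \sum_(k < r) s k *: atom n (f k) ->
     exists2 l, Sset x l & (l <= (\sum_(k < r) complex.Re `|s k| + e / 2)%:E)%E.
    move=> [|r] s f hf hx; last by apply: ub_elem.
    have hx0 : x = \sum_(k < 1) (0 : R[i]) *: atom n (0 : R).
      by rewrite hx big_ord0 big1 // => k _; rewrite scale0r.
    have hf0 : forall k : 'I_1, 0 <= (fun _ : 'I_1 => (0:R)) k < 1 by move=> k; rewrite /= lexx ltr01.
    have [l hl hle] := ub_elem (isT : (0 < 1)%N) hf0 hx0 he2.
    exists l => //; move: hle; rewrite big_ord0 big1 // => k _.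
    by rewrite normr0.
  have [t [r [s [f [hf [hx ht]]]]] hti] := inf_adherent he2 hAS.
  have [l hl hle] := key r s f hf hx.
  rewrite -ht in hle.
  apply: le_trans (ereal_inf_lbound hl) _; apply: le_trans hle _; rewrite lee_fin.
  rewrite /atomic_norm -/(AS x); lra.
Qed.
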